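(* A value function $\mathfrak I:X\times\mathbb B(X)\to\mathbb R$ satisfies (Dic) $\mathfrak I_x(x)=\mathfrak I_x(\overline x)=1$ for all $x\in X$, (Dum) $\mathfrak I_x(f)=0$ whenever $x\notin\mathrm{dep}(f)$, and cofactor-additivity, if and only if $\mathfrak I=\mathbf I$, i.e. $\mathfrak I_x(f)=\mathbb E[\mathrm D_xf]$ for all $x,f$.
   Context: $X$ is a fixed finite set of variables; $\mathbb B(X)$ is the set of Boolean functions $\{0,1\}^X\to\{0,1\}$; a variable $x$ also denotes $\mathbf u\mapsto\mathbf u(x)$ and $\overline f$ is negation. $f_{z/c}$ is the cofactor of $f$ with $z$ fixed to $c$ (regarded again as an element of $\mathbb B(X)$ not depending on $z$). $\mathrm{dep}(f)=\{x: f_{x/1}\ne f_{x/0}\}$; $\mathrm D_xf=f_{x/1}\oplus f_{x/0}$; $\mathbb E$ is the expectation under the uniform distribution on $\{0,1\}^X$. A value function is any map $\mathfrak I:X\times\mathbb B(X)\to\mathbb R$, $(x,f)\mapsto\mathfrak I_x(f)$. It is cofactor-additive if for all $f\in\mathbb B(X)$ and all variables $x\ne z$: $\mathfrak I_x(f)=\tfrac12\mathfrak I_x(f_{z/0})+\tfrac12\mathfrak I_x(f_{z/1})$. *)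

(* Defs.v *)
From mathcomp Require Import all_boot all_order all_algebra.
From mathcomp Require Import reals.
Set Implicit Arguments. Unset Strict Implicit. Unset Printing Implicit Defensive.
Import Order.TTheory GRing.Theory Num.Theory.
Local Open Scope ring_scope.

Definition assign (X : finType) := {ffun X -> bool}.
Definition BF (X : finType) := {ffun assign X -> bool}.

Definition bvar (X : finType) (x : X) : BF X := [ffun u : assign X => u x].
Definition bneg (X : finType) (f : BF X) : BF X := [ffun u => ~~ f u].
Definition upd (X : finType) (u : assign X) (z : X) (c : bool) : assign X :=
  [ffun y => if y == z then c else u y].
Definition cofactor (X : finType) (f : BF X) (z : X) (c : bool) : BF X :=
  [ffun u => f (upd u z c)].
Definition dep (X : finType) (f : BF X) : {set X} :=
  [set x | cofactor f x true != cofactor f x false].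
Definition Dx (X : finType) (x : X) (f : BF X) : BF X :=
  [ffun u => cofactor f x true u (+) cofactor f x false u].
Definition Exp (R : realType) (X : finType) (g : BF X) : R :=
  (\sum_(u : assign X) (g u)%:R) / #|{: assign X}|%:R.

Definition dic (R : realType) (X : finType) (I : X -> BF X -> R) : Prop :=
  forall x : X, I x (bvar x) = 1 /\ I x (bneg (bvar x)) = 1.
Definition dum (R : realType) (X : finType) (I : X -> BF X -> R) : Prop :=
  forall (x : X) (f : BF X), x \notin dep f -> I x f = 0.
Definition cofactor_additive (R : realType) (X : finType) (I : X -> BF X -> R) : Prop :=
  forall (f : BF X) (x z : X), x != z ->
    I x f = 2^-1 * I x (cofactor f z false) + 2^-1 * I x (cofactor f z true).

(* Main.v *)
Require Import Defs.
From mathcomp Require Import all_boot all_order all_algebra.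
From mathcomp Require Import reals.
Set Implicit Arguments. Unset Strict Implicit. Unset Printing Implicit Defensive.
Import Order.TTheory GRing.Theory Num.Theory.
Local Open Scope ring_scope.
Local Notation cofactor := Defs.cofactor.

Section S.
Variable X : finType.

Lemma upd_id (u : assign X) z : upd u z (u z) = u.
Proof. by apply/ffunP=> y; rewrite ffunE; case: eqP => // ->. Qed.

Lemma upd_upd (u : assign X) z c c' : upd (upd u z c) z c' = upd u z c'.
Proof. by apply/ffunP=> y; rewrite !ffunE; case: eqP. Qed.

Lemma upd_comm (u : assign X) y z b c : y != z ->
  upd (upd u y b) z c = upd (upd u z c) y b.
Proof.
move=> yz; apply/ffunP=> w; rewrite !ffunE.
case: (eqVneq w z) => [->|wz]; last by [].
by rewrite eq_sym (negbTE yz).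
Qed.

Lemma cof_same (f : BF X) z b c : cofactor (cofactor f z c) z b = cofactor f z c.
Proof. by apply/ffunP=> u; rewrite /cofactor !ffunE upd_upd. Qed.

Lemma cof_comm (f : BF X) y z b c : y != z ->
  cofactor (cofactor f z c) y b = cofactor (cofactor f y b) z c.
Proof. by move=> yz; apply/ffunP=> u; rewrite /cofactor !ffunE upd_comm. Qed.

Lemma Dx_cof (f : BF X) x z c : x != z ->
  Dx x (cofactor f z c) = cofactor (Dx x f) z c.
Proof.
move=> xz; apply/ffunP=> u; rewrite /Dx /cofactor !ffunE.
by rewrite (upd_comm u true c xz) (upd_comm u false c xz).
Qed.

Lemma dep_cof (f : BF X) z c : dep (cofactor f z c) \subset dep f :\ z.
Proof.
apply/subsetP => y; rewrite !inE.
case: (eqVneq y z) => [->|yz] /=; first by rewrite !cof_same eqxx.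
apply: contra => /eqP E; by rewrite (cof_comm f true c yz) (cof_comm f false c yz) E.
Qed.

Lemma nodep_eq (f : BF X) z u c : z \notin dep f -> f (upd u z c) = f u.
Proof.
rewrite inE negbK => /eqP E.
have e b : cofactor f z b u = cofactor f z false u by case: b; rewrite ?E.
move: (e c) (e (u z)); rewrite /cofactor !ffunE upd_id => -> ->. by [].
Qed.

Lemma fun_of_x (f : BF X) x : (forall z, z \in dep f -> z = x) ->
  forall n (u v : assign X), (#|[set y | u y != v y]| <= n)%N -> u x = v x -> f u = f v.
Proof.
move=> H; elim=> [|n IH] u v.
  rewrite leqn0 cards_eq0 => /eqP E _; congr (f _); apply/ffunP=> y.
  apply/eqP; move: E => /setP/(_ y); rewrite !inE; by case: eqP.
case: (pickP [pred y | u y != v y]) => [y /= uy|none]; last first.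
  move=> _ _; congr (f _); apply/ffunP=> y; apply/eqP; move: (none y) => /= /negbT.
  by rewrite negbK.
move=> Hn ux.
have yx : y != x by apply: contraNneq uy => ->; rewrite ux.
have yd : y \notin dep f by apply: contra yx => /H ->.
rewrite -(nodep_eq u (v y) yd); apply: IH; last by rewrite ffunE eq_sym (negbTE yx).
have sub : [set w | upd u y (v y) w != v w] \subset [set w | u w != v w] :\ y.
  apply/subsetP=> w; rewrite !inE ffunE; case: (eqVneq w y) => [->|_]; by rewrite ?eqxx.
rewrite -ltnS; apply: leq_ltn_trans (subset_leq_card sub) _.
by move: Hn; rewrite (cardsD1 y) inE uy.
Qed.


Variable R : realType.

Definition flip (z : X) (u : assign X) := upd u z (~~ u z).

Lemma flipK z : involutive (flip z).
Proof. by move=> u; rewrite /flip upd_upd ffunE eqxx negbK upd_id. Qed.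

Lemma sum_cof (g : BF X) z :
  \sum_u ((cofactor g z false u)%:R : R) + \sum_u (cofactor g z true u)%:R
  = 2 * \sum_u (g u)%:R.
Proof.
rewrite -big_split /=.
rewrite (eq_bigr (fun u => (g u)%:R + (g (flip z u))%:R)); last first.
  move=> u _; rewrite /cofactor /flip !ffunE.
  by case: (u z) (upd_id u z) => /= ->; rewrite // addrC.
rewrite big_split /= mulr_natl mulr2n; congr (_ + _).
by rewrite [RHS](reindex_inj (inv_inj (flipK z))).
Qed.

Lemma Exp_cof (g : BF X) z : Exp R g =
  2^-1 * Exp R (cofactor g z false) + 2^-1 * Exp R (cofactor g z true).
Proof.
rewrite /Exp -mulrDr -mulrDl sum_cof !mulrA mulVf ?mul1r //.
by rewrite pnatr_eq0.
Qed.

Lemma card_assign_neq0 : (#|{: assign X}|%:R : R) != 0.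
Proof.
rewrite pnatr_eq0 -lt0n; apply/card_gt0P; by exists [ffun _ => false].
Qed.

Lemma Exp_const (b : bool) : Exp R ([ffun _ => b] : BF X) = b%:R.
Proof.
rewrite /Exp (eq_bigr (fun _ => b%:R)); last by move=> u _; rewrite ffunE.
by rewrite sumr_const -[_ *+ _]mulr_natr mulfK // card_assign_neq0.
Qed.

Lemma Exp_dic : dic (fun (x : X) (f : BF X) => Exp R (Dx x f)).
Proof.
move=> x; split.
  have -> : Dx x (bvar x) = [ffun _ => true].
    by apply/ffunP=> u; rewrite /Dx /cofactor /bvar !ffunE eqxx.
  by rewrite Exp_const.
have -> : Dx x (bneg (bvar x)) = [ffun _ => true].
  by apply/ffunP=> u; rewrite /Dx /cofactor /bneg /bvar !ffunE eqxx.
by rewrite Exp_const.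
Qed.

Lemma Exp_dum : dum (fun (x : X) (f : BF X) => Exp R (Dx x f)).
Proof.
move=> x f; rewrite inE negbK => /eqP E.
have -> : Dx x f = [ffun _ => false].
  by apply/ffunP=> u; rewrite /Dx E !ffunE addbb.
by rewrite Exp_const.
Qed.

Lemma Exp_add : cofactor_additive (fun (x : X) (f : BF X) => Exp R (Dx x f)).
Proof.
move=> f x z xz /=; rewrite !Dx_cof //; exact: Exp_cof.
Qed.

Lemma base (J1 J2 : X -> BF X -> R) : dic J1 -> dum J1 -> dic J2 -> dum J2 ->
  forall x f, (forall z, z \in dep f -> z = x) -> J1 x f = J2 x f.
Proof.
move=> d1 m1 d2 m2 x f H.
have Hf (u v : assign X) : u x = v x -> f u = f v.
  exact: (fun_of_x H (leqnn _)).
pose u0 : assign X := [ffun _ => false].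
have Hu (u : assign X) : f u = f (upd u0 x (u x)) by apply: Hf; rewrite ffunE eqxx.
case: (eqVneq (f (upd u0 x true)) (f (upd u0 x false))) => [ab|].
  have nd : x \notin dep f.
    rewrite inE negbK; apply/eqP/ffunP=> u; rewrite !ffunE.
    by rewrite Hu [in RHS]Hu !ffunE eqxx.
  by rewrite m1 // m2.
case Ha: (f (upd u0 x true)); case Hb: (f (upd u0 x false)) => // _.
  have -> : f = bvar x.
    by apply/ffunP=> u; rewrite Hu ffunE; case: (u x).
  by case: (d1 x) => -> _; case: (d2 x) => -> _.
have -> : f = bneg (bvar x).
  by apply/ffunP=> u; rewrite Hu !ffunE; case: (u x); rewrite ?Ha ?Hb.
by case: (d1 x) => _ ->; case: (d2 x) => _ ->.
Qed.

Lemma uniq_main (I : X -> BF X -> R) : dic I -> dum I -> cofactor_additive I ->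
  forall n x f, (#|dep f| <= n)%N -> I x f = Exp R (Dx x f).
Proof.
move=> dI mI aI; elim=> [|n IH] x f Hn.
  apply: (base dI mI Exp_dic Exp_dum) => z.
  by move: Hn; rewrite leqn0 cards_eq0 => /eqP ->; rewrite inE.
case: (pickP [pred z | (z \in dep f) && (z != x)]) => [z /andP[zd zx]|none];
  last first.
  apply: (base dI mI Exp_dic Exp_dum) => z zd; apply/eqP.
  by move: (none z) => /=; rewrite zd /= => /negbFE.
have xz : x != z by rewrite eq_sym.
have Hc c : (#|dep (cofactor f z c)| <= n)%N.
  rewrite -ltnS; apply: leq_ltn_trans (subset_leq_card (dep_cof f z c)) _.
  by move: Hn; rewrite (cardsD1 z) zd.
by rewrite (aI f x z xz) !IH // (Exp_add f xz).
Qed.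

End S.

Theorem mainTheorem7 (R : realType) (X : finType) (I : X -> BF X -> R) :
  (dic I /\ dum I /\ cofactor_additive I) <->
  (forall (x : X) (f : BF X), I x f = Exp R (Dx x f)).
Proof.
split.
  by case=> [dI [mI aI]] x f; exact: (@uniq_main X R I dI mI aI _ x f (leqnn _)).
move=> H.
split; first by move=> x; rewrite !H; exact: Exp_dic.
split; first by move=> x f nd; rewrite H; exact: Exp_dum.
by move=> f x z xz; rewrite !H; exact: Exp_add.
Qed.
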